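(* For every $n\in\mathbb{N}_{\geq1}$, the maximally balanced tree $T_n^{mb}$ with $n$ leaves has minimal Colless index, i.e. $\mathcal{C}(T_n^{mb})=c_n$, where $c_n$ is the minimum of $\mathcal{C}(T)$ over all rooted binary trees $T$ with $n$ leaves.
   Context: A rooted binary tree with $n\geq 2$ leaves is a rooted tree whose root has degree 2 and all other internal nodes have degree 3; for $n=1$ it is a single node. For an internal node $v$ with children $v_1,v_2$, let $\kappa(v_i)$ be the number of leaves descending from $v_i$ ($1$ if $v_i$ is a leaf), and let $bal(v)=|\kappa(v_1)-\kappa(v_2)|$. The Colless index is $\mathcal{C}(T)=\sum_v bal(v)$ over all internal nodes $v$. A rooted binary tree is maximally balanced if $bal(v)\leq 1$ for every internal node $v$; for each $n$ there is (up to isomorphism) a unique such tree $T_n^{mb}$. *)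

(* Defs.v *)
From Stdlib Require Import Arith.

(* Rooted binary trees: a single leaf, or a root with two (ordered) subtrees.
   Isomorphism classes correspond to trees modulo swapping children; all
   notions below are invariant under such swaps. *)
Inductive bintree : Type :=
| Leaf : bintree
| Node : bintree -> bintree -> bintree.

Fixpoint leaves (t : bintree) : nat :=
  match t with
  | Leaf => 1
  | Node l r => leaves l + leaves r
  end.

Definition absdiff (a b : nat) : nat := (a - b) + (b - a).

Definition bal (l r : bintree) : nat := absdiff (leaves l) (leaves r).

Fixpoint colless (t : bintree) : nat :=
  match t with
  | Leaf => 0
  | Node l r => bal l r + colless l + colless r
  end.

Fixpoint max_balanced (t : bintree) : Prop :=
  match t with
  | Leaf => True
  | Node l r => bal l r <= 1 /\ max_balanced l /\ max_balanced r
  end.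

Definition is_min_colless (n c : nat) : Prop :=
  (exists t, leaves t = n /\ colless t = c) /\
  (forall t, leaves t = n -> c <= colless t).

(* Main.v *)
Require Import Defs.
From Stdlib Require Import Arith Lia.

Fixpoint cf (k n : nat) : nat :=
  match k with
  | 0 => 0
  | S k' => match n with
            | 0 => 0
            | 1 => 0
            | _ => n mod 2 + cf k' (n - n / 2) + cf k' (n / 2)
            end
  end.

Lemma cf_fuel : forall k1 k2 n, n <= k1 -> n <= k2 -> cf k1 n = cf k2 n.
Proof.
  induction k1 as [|k1 IH]; intros k2 n H1 H2.
  - assert (n = 0) by lia; subst. destruct k2; reflexivity.
  - destruct k2 as [|k2]. { assert (n = 0) by lia; subst. reflexivity. }
    destruct n as [|[|n]]; try reflexivity.
    change (cf (S k1) (S (S n))) with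
      (S (S n) mod 2 + cf k1 (S (S n) - S (S n) / 2) + cf k1 (S (S n) / 2)).
    change (cf (S k2) (S (S n))) with
      (S (S n) mod 2 + cf k2 (S (S n) - S (S n) / 2) + cf k2 (S (S n) / 2)).
    assert (S (S n) / 2 <= S n) by (apply Nat.div_le_upper_bound; lia).
    assert (S (S n) / 2 >= 1) by (apply Nat.div_le_lower_bound; lia).
    rewrite (IH k2 (S (S n) - S (S n) / 2)) by lia.
    rewrite (IH k2 (S (S n) / 2)) by lia. reflexivity.
Qed.

Definition f (n : nat) := cf n n.

Lemma f_eq : forall n, 2 <= n -> f n = n mod 2 + f (n - n / 2) + f (n / 2).
Proof.
  intros n H. unfold f. destruct n as [|[|n]]; try lia.
  assert (S (S n) / 2 <= S n) by (apply Nat.div_le_upper_bound; lia).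
  assert (S (S n) / 2 >= 1) by (apply Nat.div_le_lower_bound; lia).
  change (cf (S (S n)) (S (S n))) with
    (S (S n) mod 2 + cf (S n) (S (S n) - S (S n) / 2) + cf (S n) (S (S n) / 2)).
  rewrite (cf_fuel (S n) (S (S n) - S (S n) / 2)) by lia.
  rewrite (cf_fuel (S n) (S (S n) / 2)) by lia. reflexivity.
Qed.

Lemma f1 : f 1 = 0. Proof. reflexivity. Qed.

Lemma f_even : forall k, 1 <= k -> f (2 * k) = 2 * f k.
Proof.
  intros k H. rewrite f_eq by lia.
  assert (E : 2 * k / 2 = k) by (rewrite Nat.mul_comm; apply Nat.div_mul; lia).
  rewrite E. assert (M : 2 * k mod 2 = 0) by (rewrite Nat.mul_comm; apply Nat.Div0.mod_mul).
  rewrite M. replace (2 * k - k) with k by lia. lia.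
Qed.

Lemma f_odd : forall k, 1 <= k -> f (2 * k + 1) = 1 + f (k + 1) + f k.
Proof.
  intros k H. rewrite f_eq by lia.
  assert (E : (2 * k + 1) / 2 = k).
  { symmetry. apply (Nat.div_unique _ 2 k 1); lia. }
  assert (M : (2 * k + 1) mod 2 = 1).
  { symmetry. apply (Nat.mod_unique _ 2 k 1); lia. }
  rewrite E, M. replace (2 * k + 1 - k) with (k + 1) by lia. lia.
Qed.

Lemma split2 : forall a, exists x, a = 2 * x \/ a = 2 * x + 1.
Proof.
  induction a as [|a [x [H|H]]].
  - exists 0; lia.
  - exists x; lia.
  - exists (S x); lia.
Qed.

Lemma key : forall n a b, a + b = n -> 1 <= a -> 1 <= b ->
  f (a + b) <= f a + f b + absdiff a b.
Proof.
  induction n as [n IH] using lt_wf_ind.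
  intros a b Hn Ha Hb. unfold absdiff.
  destruct (split2 a) as [x [Ea|Ea]]; destruct (split2 b) as [y [Eb|Eb]]; subst a b.
  - replace (2 * x + 2 * y) with (2 * (x + y)) by lia.
    rewrite !f_even by lia.
    pose proof (IH (x + y) ltac:(lia) x y eq_refl ltac:(lia) ltac:(lia)).
    unfold absdiff in H. lia.
  - replace (2 * x + (2 * y + 1)) with (2 * (x + y) + 1) by lia.
    rewrite f_odd by lia. rewrite f_even by lia.
    destruct y as [|y].
    + pose proof (IH (x + 1) ltac:(lia) x 1 eq_refl ltac:(lia) ltac:(lia)).
      unfold absdiff in H. simpl (2 * 0 + 1) in *. rewrite f1 in *.
      replace (x + 0 + 1) with (x + 1) by lia. replace (x + 0) with x by lia. lia.
    + rewrite f_odd by lia.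
      pose proof (IH (x + (S y + 1)) ltac:(lia) x (S y + 1) eq_refl ltac:(lia) ltac:(lia)).
      pose proof (IH (x + S y) ltac:(lia) x (S y) eq_refl ltac:(lia) ltac:(lia)).
      unfold absdiff in *. rewrite Nat.add_assoc in H. lia.
  - replace (2 * x + 1 + 2 * y) with (2 * (x + y) + 1) by lia.
    rewrite f_odd by lia. rewrite f_even by lia.
    destruct x as [|x].
    + pose proof (IH (y + 1) ltac:(lia) y 1 eq_refl ltac:(lia) ltac:(lia)).
      unfold absdiff in H. simpl (2 * 0 + 1) in *. rewrite f1 in *.
      replace (0 + y + 1) with (y + 1) by lia. replace (0 + y) with y by lia. lia.
    + rewrite f_odd by lia.
      pose proof (IH (S x + 1 + y) ltac:(lia) (S x + 1) y eq_refl ltac:(lia) ltac:(lia)).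
      pose proof (IH (S x + y) ltac:(lia) (S x) y eq_refl ltac:(lia) ltac:(lia)).
      unfold absdiff in *. replace (S x + y + 1) with (S x + 1 + y) by lia. lia.
  - replace (2 * x + 1 + (2 * y + 1)) with (2 * (x + y + 1)) by lia.
    rewrite f_even by lia.
    destruct x as [|x]; destruct y as [|y].
    + simpl (0 + 0 + 1). simpl (2 * 0 + 1). rewrite f1. lia.
    + simpl (2 * 0 + 1). rewrite f1. rewrite f_odd by lia.
      pose proof (IH (S y + 1) ltac:(lia) (S y) 1 eq_refl ltac:(lia) ltac:(lia)).
      unfold absdiff in H. rewrite f1 in H. replace (0 + S y + 1) with (S y + 1) by lia. lia.
    + simpl (2 * 0 + 1). rewrite f1. rewrite f_odd by lia.
      pose proof (IH (S x + 1) ltac:(lia) (S x) 1 eq_refl ltac:(lia) ltac:(lia)).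
      unfold absdiff in H. rewrite f1 in H. replace (S x + 0 + 1) with (S x + 1) by lia. lia.
    + rewrite !f_odd by lia.
      pose proof (IH (S x + 1 + S y) ltac:(lia) (S x + 1) (S y) eq_refl ltac:(lia) ltac:(lia)).
      pose proof (IH (S x + (S y + 1)) ltac:(lia) (S x) (S y + 1) eq_refl ltac:(lia) ltac:(lia)).
      unfold absdiff in *. replace (S x + S y + 1) with (S x + 1 + S y) in * by lia.
      replace (S x + (S y + 1)) with (S x + 1 + S y) in H0 by lia. lia.
Qed.

Lemma leaves_pos : forall t, 1 <= leaves t.
Proof. induction t; simpl; lia. Qed.

Lemma mb_colless : forall t, max_balanced t -> colless t = f (leaves t).
Proof.
  induction t as [|l IHl r IHr]; simpl.
  - reflexivity.
  - intros [Hb [Hl Hr]]. rewrite IHl, IHr by assumption.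
    pose proof (leaves_pos l). pose proof (leaves_pos r).
    unfold bal, absdiff in *.
    set (a := leaves l) in *. set (b := leaves r) in *. clearbody a b.
    assert (a = b \/ a = b + 1 \/ b = a + 1) as [E|[E|E]] by lia; subst.
    + replace (b + b) with (2 * b) by lia. rewrite f_even by lia. lia.
    + replace (b + 1 + b) with (2 * b + 1) by lia. rewrite f_odd by lia. lia.
    + replace (a + (a + 1)) with (2 * a + 1) by lia. rewrite f_odd by lia. lia.
Qed.

Lemma lower : forall t, f (leaves t) <= colless t.
Proof.
  induction t as [|l IHl r IHr]; simpl.
  - rewrite f1; lia.
  - pose proof (key _ (leaves l) (leaves r) eq_refl (leaves_pos l) (leaves_pos r)).
    unfold bal. lia.
Qed.

Theorem theorem4 : forall (n : nat), 1 <= n ->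
  forall t : bintree, leaves t = n -> max_balanced t ->
  is_min_colless n (colless t).
Proof.
  intros n _ t Ht Hmb. split.
  - exists t; auto.
  - intros t' Ht'. rewrite (mb_colless t Hmb), Ht, <- Ht'. apply lower.
Qed.
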